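(* Let $\sigma(\boldsymbol\epsilon)$ be the (complex form) covariance matrix of a family of $N$-mode Gaussian states depending differentiably on $\boldsymbol\epsilon$, let $A=K\sigma$, and let $\lambda_{\min}$ be the smallest symplectic eigenvalue of $\sigma$, assumed to satisfy $\lambda_{\min}>1$. For an integer $M\ge 0$ define the remainder $R_M^{ij}=\frac12\sum_{n=M+1}^\infty\operatorname{tr}\big[A^{-n}\partial_iA\,A^{-n}\partial_jA\big]$. Then \[ |R_M^{ij}|\le\frac{\sqrt{\operatorname{tr}[(A\partial_iA)^2]}\,\sqrt{\operatorname{tr}[(A\partial_jA)^2]}}{2\lambda_{\min}^{2(M+1)}(\lambda_{\min}^2-1)}. \]
   Context: Bosonic system with $N$ modes; $\hat{\mathbf A}=(\hat a_1,\dots,\hat a_N,\hat a_1^\dagger,\dots,\hat a_N^\dagger)^T$; $K=\begin{bmatrix}I&0\\0&-I\end{bmatrix}$. For a Gaussian state $\hat\rho$, $\boldsymbol d^m=\operatorname{tr}[\hat\rho\hat{\mathbf A}^m]$, $\Delta\hat{\mathbf A}=\hat{\mathbf A}-\boldsymbol d$, $\sigma^{mn}=\operatorname{tr}[\hat\rho\{\Delta\hat{\mathbf A}^m,(\Delta\hat{\mathbf A}^n)^\dagger\}]$. Symplectic eigenvalues are the positive eigenvalues of $K\sigma$. $\partial_i=\partial/\partial\epsilon_i$. *)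

(* Defs.v *)
From HB Require Import structures.
From mathcomp Require Import all_boot all_order all_algebra.
From mathcomp Require Import all_classical all_reals all_analysis.
From mathcomp Require Import complex.
Set Implicit Arguments. Unset Strict Implicit. Unset Printing Implicit Defensive.
Import Order.TTheory GRing.Theory Num.Theory.
Import numFieldNormedType.Exports.
Local Open Scope ring_scope.
Local Open Scope complex_scope.
Local Open Scope classical_set_scope.

Section Defs.
Variable R : realType.
Local Notation C := (R[i]).

Definition adjmx (m n : nat) (M : 'M[C]_(m, n)) : 'M[C]_(n, m) :=
  (map_mx (fun z : C => z^*) M)^T.

Definition Kmx (N : nat) : 'M[C]_(N + N) :=
  block_mx 1%:M 0 0 (- 1%:M).

(* Structure of a complex-form covariance matrix of an N-mode (Gaussian) state:
   Hermitian, of the block form [[X, Y], [conj Y, conj X]] (coming from the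
   ordering (a_1..a_N, a_1^dag..a_N^dag)), and positive definite. *)
Definition is_cov_mx (N : nat) (s : 'M[C]_(N + N)) : Prop :=
  [/\ adjmx s = s,
      exists X Y : 'M[C]_N,
        s = block_mx X Y (map_mx (fun z : C => z^*) Y)
                         (map_mx (fun z : C => z^*) X)
    & forall v : 'cV[C]_(N + N), v != 0 -> 0 < (adjmx v *m s *m v) 0 0].

Definition symp_eig (N : nat) (s : 'M[C]_(N + N)) (l : C) : Prop :=
  0 < l /\ eigenvalue (Kmx N *m s) l.

Definition min_symp_eig (N : nat) (s : 'M[C]_(N + N)) (l : C) : Prop :=
  symp_eig s l /\ forall mu, symp_eig s mu -> l <= mu.

Definition unitv (p : nat) (i : 'I_p) : 'rV[R]_p := delta_mx 0 i.

Definition cpartial (p : nat) (f : 'rV[R]_p -> C) (i : 'I_p) (e : 'rV[R]_p) : C :=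
  ('D_(unitv i) (fun x => complex.Re (f x)) e) +i* ('D_(unitv i) (fun x => complex.Im (f x)) e).

Definition mxpartial (p n : nat) (F : 'rV[R]_p -> 'M[C]_n) (i : 'I_p) (e : 'rV[R]_p)
  : 'M[C]_n := \matrix_(a, b) cpartial (fun x => F x a b) i e.

Definition mx_differentiable (p n : nat) (F : 'rV[R]_p -> 'M[C]_n) : Prop :=
  forall (a b : 'I_n) (e : 'rV[R]_p),
    differentiable (fun x => complex.Re (F x a b)) e /\
    differentiable (fun x => complex.Im (F x a b)) e.

Definition cseries_to (t : nat -> C) (k : nat) (r : C) : Prop :=
  (fun K : nat => complex.Re (\sum_(k <= n < K) t n)) @ \oo --> complex.Re r /\
  (fun K : nat => complex.Im (\sum_(k <= n < K) t n)) @ \oo --> complex.Im r.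

End Defs.

(* Main.v *)
Require Import Defs.
Set Warnings "-notation-overridden,-ambiguous-paths,-notation-incompatible-prefix,-deprecated".
From HB Require Import structures.
From mathcomp Require Import all_boot all_order all_algebra.
From mathcomp Require Import all_classical all_reals all_analysis.
From mathcomp Require Import complex.
From mathcomp Require Import spectral sesquilinear.
From mathcomp Require Import ring lra.
Import Order.TTheory GRing.Theory Num.Theory Num.Def.
Import numFieldNormedType.Exports.
Set Implicit Arguments. Unset Strict Implicit. Unset Printing Implicit Defensive.
Local Open Scope ring_scope.
Local Open Scope sesquilinear_scope.


Section Gen.
Variable C : numClosedFieldType.

Lemma tcM m n p (A : 'M[C]_(m, n)) (B : 'M[C]_(n, p)) : (A *m B)^t* = B^t* *m A^t*.
Proof. by rewrite trmx_mul map_mxM. Qed.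

Lemma tc_diag n (d : 'rV[C]_n) : (diag_mx d)^t* = diag_mx (map_mx conjC d).
Proof. by rewrite tr_diag_mx map_diag_mx. Qed.

Lemma dmul n (x y : 'rV[C]_n) :
  diag_mx x *m diag_mx y = diag_mx (\row_k (x 0 k * y 0 k)).
Proof.
apply/matrixP => a b; rewrite mul_diag_mx !mxE.
by case: eqP => [->|]; rewrite ?mulr1n ?mulr0n ?mulr0.
Qed.

Lemma unitary_r n (P : 'M[C]_n) : P \is unitarymx -> P *m P^t* = 1%:M.
Proof. by move/unitarymxP. Qed.

Lemma unitary_l n (P : 'M[C]_n) : P \is unitarymx -> P^t* *m P = 1%:M.
Proof. by move/unitary_r/mulmx1C. Qed.

Lemma spec_herm n (A : 'M[C]_n) : A^t* = A ->
  let P := spectralmx A in let d := spectral_diag A in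
  [/\ A = P^t* *m diag_mx d *m P, P *m P^t* = 1%:M, P^t* *m P = 1%:M
    & forall k, conjC (d 0 k) = d 0 k].
Proof.
move=> hA P d.
have Pu : P \is unitarymx by apply: spectral_unitarymx.
have nA : A \is normalmx by apply/normalmxP; rewrite hA.
have eA : A = P^t* *m diag_mx d *m P.
  by rewrite {1}(orthomx_spectralP nA) invmx_unitary.
have r := unitary_r Pu; have l := unitary_l Pu.
split=> // k.
have eD : diag_mx d = P *m A *m P^t*.
  by rewrite eA !mulmxA r mul1mx -mulmxA r mulmx1.
have : (diag_mx d)^t* = diag_mx d by rewrite eD !tcM trmxCK hA mulmxA.
rewrite tc_diag => /matrixP /(_ k k); rewrite !mxE eqxx !mulr1n.
by [].
Qed.

Lemma row_unit_neq0 n (P Q : 'M[C]_n) k : P *m Q = 1%:M -> row k P != 0.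
Proof.
move=> PQ; apply/eqP => rk.
have e : forall j, P k j = 0 by move=> j; have := congr1 (fun M : 'rV[C]_n => M 0 j) rk; rewrite !mxE.
have : (P *m Q) k k = 1 by rewrite PQ mxE eqxx.
rewrite mxE big1 => [/eqP|j _]; last by rewrite e mul0r.
by rewrite eq_sym oner_eq0.
Qed.

Lemma decomp n (s K : 'M[C]_n) : s^t* = s ->
  (forall u : 'rV_n, u != 0 -> 0 < (u *m s *m u^t*) 0 0) -> K^t* = K ->
  exists (Y : 'M[C]_n) (b : 'rV[C]_n),
    [/\ Y *m s *m Y^t* = 1%:M, Y *m s *m K = diag_mx b *m Y
      & forall k, conjC (b 0 k) = b 0 k].
Proof.
move=> hs pd hK.
have [es Pr Pl dr] := spec_herm hs.
set P := spectralmx s in es Pr Pl; set d := spectral_diag s in es dr.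
have dpos : forall k, 0 < d 0 k.
  move=> k; have := pd (row k P) (row_unit_neq0 k Pr).
  have -> : (row k P *m s *m (row k P)^t*) 0 0 = (P *m s *m P^t*) k k.
    by rewrite -row_mul tr_row map_col !mxE; apply: eq_bigr => j _; rewrite !mxE.
  by rewrite es !mulmxA Pr mul1mx -mulmxA Pr mulmx1 mxE eqxx mulr1n.
pose sd := \row_k sqrtC (d 0 k).
pose sdi := \row_k (sqrtC (d 0 k))^-1.
have sdr : map_mx conjC sd = sd.
  apply/rowP => k; rewrite !mxE; apply: conj_Creal; apply: ger0_real.
  by rewrite sqrtC_ge0 ltW.
have sdne : forall k, sqrtC (d 0 k) != 0.
  by move=> k; rewrite sqrtC_eq0 gt_eqF.
have ddi : diag_mx sd *m diag_mx sdi = 1%:M.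
  by rewrite dmul; apply/matrixP => a b; rewrite !mxE; case: eqP => //= _; rewrite mulfV.
have did : diag_mx sdi *m diag_mx sd = 1%:M by apply: mulmx1C.
have dsq : diag_mx sd *m diag_mx sd = diag_mx d.
  by rewrite dmul; congr diag_mx; apply/rowP => k; rewrite !mxE -expr2 sqrtCK.
pose L := P^t* *m diag_mx sd.
pose Li := diag_mx sdi *m P.
have LLi : L *m Li = 1%:M by rewrite /L /Li mulmxA -(mulmxA _ (diag_mx sd)) ddi mulmx1 Pl.
have LiL : Li *m L = 1%:M by apply: mulmx1C.
have LLt : L *m L^t* = s.
  by rewrite /L tcM trmxCK tc_diag sdr mulmxA -(mulmxA (P^t*)) dsq -es.
clearbody L Li.
pose B := L^t* *m K *m L.
have hB : B^t* = B by rewrite /B !tcM trmxCK hK mulmxA.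
have [eB Qr Ql br] := spec_herm hB.
set Q := spectralmx B in eB Qr Ql; set b := spectral_diag B in eB br.
exists (Q *m Li), b; split => //.
- have t1 : (1%:M : 'M[C]_n)^t* = 1%:M by rewrite trmx1 map_mx1.
  rewrite -LLt tcM !mulmxA -(mulmxA Q Li L) LiL mulmx1.
  by rewrite -(mulmxA Q (L^t*) (Li^t*)) -tcM LiL t1 mulmx1 Qr.
- rewrite -LLt !mulmxA -(mulmxA Q Li L) LiL mulmx1.
  have -> : Q *m L^t* *m K = Q *m B *m Li.
    by rewrite /B !mulmxA -(mulmxA _ L Li) LLi mulmx1.
  by rewrite eB !mulmxA Qr mul1mx.
Qed.


Lemma trace4 n (x y : 'rV[C]_n) (G H : 'M[C]_n) :
  \tr (diag_mx x *m G *m diag_mx y *m H) =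
  \sum_k \sum_l x 0 k * G k l * y 0 l * H l k.
Proof.
rewrite /mxtrace; apply: eq_bigr => k _; rewrite mxE; apply: eq_bigr => l _.
by rewrite mul_mx_diag mul_diag_mx !mxE.
Qed.

Lemma trace4' n (x b y c : 'rV[C]_n) (G H : 'M[C]_n) :
  \tr (diag_mx x *m (diag_mx b *m G) *m diag_mx y *m (diag_mx c *m H)) =
  \sum_k \sum_l (x 0 k * b 0 k) * G k l * (y 0 l * c 0 l) * H l k.
Proof.
rewrite (mulmxA (diag_mx x) (diag_mx b) G) dmul.
rewrite (mulmxA (_ *m diag_mx y) (diag_mx c) H) -(mulmxA _ (diag_mx y) (diag_mx c)) dmul trace4.
by apply: eq_bigr => k _; apply: eq_bigr => l _; rewrite !mxE.
Qed.

Lemma tr_cyc n (V W P Q X Z : 'M[C]_n) :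
  \tr (V *m P *m W *m X *m (V *m Q *m W *m Z)) =
  \tr (P *m (W *m X *m V) *m Q *m (W *m Z *m V)).
Proof.
by rewrite -!mulmxA mxtrace_mulC -!mulmxA.
Qed.

Lemma key n (s K Y : 'M[C]_n) (b : 'rV[C]_n) :
  K *m K = 1%:M -> Y *m s *m Y^t* = 1%:M -> Y *m s *m K = diag_mx b *m Y ->
  [/\ forall k, b 0 k != 0,
      forall k, row k (Y *m s) *m (K *m s) = b 0 k *: row k (Y *m s),
      forall k, row k (Y *m s) != 0,
      forall (X Z : 'M[C]_n) m,
        \tr (invmx (K *m s) ^+ m *m (K *m X) *m (invmx (K *m s) ^+ m *m (K *m Z))) =
        \sum_k \sum_l ((b 0 k)^-1 ^+ m * b 0 k) * (Y *m X *m Y^t*) k l *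
                    ((b 0 l)^-1 ^+ m * b 0 l) * (Y *m Z *m Y^t*) l k
    & forall X : 'M[C]_n,
        \tr ((K *m s) *m (K *m X) *m ((K *m s) *m (K *m X))) =
        \sum_k \sum_l (b 0 k ^+ 2) * (Y *m X *m Y^t*) k l *
                    (b 0 l ^+ 2) * (Y *m X *m Y^t*) l k].
Proof.
move=> KK WV YK.
have [W eW] : {W | W = Y *m s} by exists (Y *m s).
have [V eV] : {V | V = Y^t*} by exists (Y^t*).
rewrite -eW; rewrite -eW -eV in WV.
have VW : V *m W = 1%:M by apply: mulmx1C.
have WA : W *m (K *m s) = diag_mx b *m W by rewrite eW mulmxA YK mulmxA.
have AV : K *m s = V *m diag_mx b *m W by rewrite -mulmxA -WA mulmxA VW mul1mx.
have [Wu Vu] := mulmx1_unit WV.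
have [Ku _] := mulmx1_unit KK.
have WV0 : Y *m (s *m Y^t*) = 1%:M by rewrite mulmxA -eW -eV.
have [_ sYu] := mulmx1_unit WV0.
have su : s \in unitmx by move: sYu; rewrite unitmx_mul => /andP[].
have Au : K *m s \in unitmx by rewrite unitmx_mul Ku su.
have Du : diag_mx b \in unitmx.
  have -> : diag_mx b = W *m (K *m s) *m V by rewrite WA -mulmxA WV mulmx1.
  by rewrite unitmx_mul Vu andbT unitmx_mul Au andbT.
have bne : forall k, b 0 k != 0.
  move=> k; have := mulmxV Du; move/matrixP/(_ k k); rewrite mul_diag_mx !mxE eqxx.
  by apply: contra_eqN => /eqP ->; rewrite mul0r eq_sym oner_eq0.
pose bi := \row_k (b 0 k)^-1.
have invA : invmx (K *m s) = V *m diag_mx bi *m W.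
  have h : (K *m s) *m (V *m diag_mx bi *m W) = 1%:M.
    rewrite AV !mulmxA -(mulmxA (V *m diag_mx b) W V) WV mulmx1.
    rewrite -(mulmxA V) dmul.
    have -> : \row_k (b 0 k * bi 0 k) = const_mx 1.
      by apply/rowP => k; rewrite !mxE mulfV.
    by rewrite diag_const_mx mulmx1 VW.
  by rewrite -[LHS]mulmx1 -h mulKmx.
have powA : forall m, invmx (K *m s) ^+ m = V *m diag_mx (\row_k ((b 0 k)^-1 ^+ m)) *m W.
  elim=> [|m IH].
    rewrite expr0.
    have -> : \row_k ((b 0 k)^-1 ^+ 0) = const_mx 1 by apply/rowP => k; rewrite !mxE expr0.
    by rewrite diag_const_mx mulmx1 VW.
  rewrite exprS IH invA -mulmxE !mulmxA -(mulmxA (V *m diag_mx bi) W V) WV mulmx1 -(mulmxA V (diag_mx bi)) dmul.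
  congr (_ *m diag_mx _ *m _); apply/rowP => k; rewrite !mxE exprS.
  by [].
have WKV : forall X, W *m (K *m X) *m V = diag_mx b *m (Y *m X *m Y^t*).
  by move=> X; rewrite eW eV mulmxA YK -!mulmxA.
split => //.
- by move=> k; rewrite -row_mul WA mul_diag_mx; apply/rowP => l; rewrite !mxE.
- by move=> k; apply: (row_unit_neq0 k WV).
- move=> X Z m; rewrite powA tr_cyc !WKV trace4'.
  by apply: eq_bigr => k _; apply: eq_bigr => l _; rewrite !mxE.
- move=> X; rewrite AV tr_cyc !WKV trace4'.
  by apply: eq_bigr => k _; apply: eq_bigr => l _; rewrite !mxE expr2.
Qed.

End Gen.


Section Gen2.
Variable C : numClosedFieldType.

Lemma CS (I : finType) (a c : I -> C) : (forall x, 0 <= a x) -> (forall x, 0 <= c x) ->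
  \sum_x a x * c x <=
  sqrtC (\sum_x a x ^+ 2) * sqrtC (\sum_x c x ^+ 2).
Proof.
move=> a0 c0.
set U := \sum_x a x ^+ 2; set V := \sum_x c x ^+ 2; set S := \sum_x a x * c x.
have ar : forall x, a x \is Num.real by move=> x; apply: ger0_real.
have cr : forall x, c x \is Num.real by move=> x; apply: ger0_real.
have U0 : 0 <= U by apply: sumr_ge0 => x _; rewrite exprn_ge0.
have V0 : 0 <= V by apply: sumr_ge0 => x _; rewrite exprn_ge0.
have S0 : 0 <= S by apply: sumr_ge0 => x _; rewrite mulr_ge0.
have e1 : U * V = \sum_x \sum_y a x ^+ 2 * c y ^+ 2.
  by rewrite mulr_suml; apply: eq_bigr => x _; rewrite mulr_sumr.
have e2 : U * V = \sum_x \sum_y a y ^+ 2 * c x ^+ 2.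
  rewrite mulrC mulr_suml; apply: eq_bigr => x _; rewrite mulr_sumr.
  by apply: eq_bigr => y _; rewrite mulrC.
have e3 : S ^+ 2 = \sum_x \sum_y (a x * c x) * (a y * c y).
  by rewrite expr2 mulr_suml; apply: eq_bigr => x _; rewrite mulr_sumr.
have key : \sum_x \sum_y (a x * c y - a y * c x) ^+ 2 = U * V + U * V - (S ^+ 2 + S ^+ 2).
  rewrite {1}e1 {1}e2 e3 -!big_split -sumrB /=; apply: eq_bigr => x _.
  rewrite -!big_split -sumrB /=; apply: eq_bigr => y _; ring.
have pos : 0 <= \sum_x \sum_y (a x * c y - a y * c x) ^+ 2.
  apply: sumr_ge0 => x _; apply: sumr_ge0 => y _.
  by rewrite -realEsqr realB ?realM.
have le : S ^+ 2 <= U * V.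
  move: pos; rewrite key subr_ge0 -!mulr2n.
  by rewrite ler_pMn2r.
rewrite -sqrtCM ?nnegrE // -(sqrCK S0).
by rewrite ler_sqrtC ?nnegrE ?exprn_ge0 ?mulr_ge0.
Qed.

Lemma tail_bound (I : finType) (c q : I -> C) (rho : C) K :
  0 <= rho -> rho < 1 -> (forall x, `|q x| <= rho) ->
  `|\sum_x c x * q x ^+ K / (1 - q x)| <= (\sum_x `|c x|) * (rho ^+ K / (1 - rho)).
Proof.
move=> r0 r1 hq.
apply: le_trans (ler_norm_sum _ _ _) _; rewrite mulr_suml; apply: ler_sum => x _.
have h1 : 0 < 1 - rho by rewrite subr_gt0.
have h2 : 1 - rho <= `|1 - q x|.
  apply: le_trans (lerB_dist _ _); rewrite normr1 lerB //.
have h3 : 0 < `|1 - q x| by apply: lt_le_trans h2.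
rewrite !normrM normfV normrX -mulrA ler_wpM2l //.
apply: ler_pM.
- by rewrite exprn_ge0.
- by rewrite invr_ge0.
- by apply: (@lerXn2r C K); rewrite ?nnegrE ?hq.
by rewrite lef_pV2 ?posrE.
Qed.

Lemma psum (I : finType) (c q : I -> C) m K : (forall x, q x != 1) ->
  \sum_(m <= n < m + K) \sum_x c x * q x ^+ n.+1 =
  \sum_x c x * q x ^+ m.+1 / (1 - q x) - \sum_x c x * q x ^+ (m + K).+1 / (1 - q x).
Proof.
move=> hq; elim: K => [|K IH]; first by rewrite addn0 big_geq // subrr.
rewrite addnS big_nat_recr ?leq_addr //= IH -addrA; congr (_ + _).
rewrite addrC -opprB; congr (- _); rewrite -sumrB; apply: eq_bigr => x _.
have hx : 1 - q x != 0 by rewrite subr_eq0 eq_sym.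
rewrite [q x ^+ (m + K).+2]exprS; field.
exact: hx.
Qed.

End Gen2.

Lemma Re_sub (R : rcfType) (x y : R[i]) : complex.Re (x - y) = complex.Re x - complex.Re y.
Proof. by case: x; case: y. Qed.

Lemma Im_sub (R : rcfType) (x y : R[i]) : complex.Im (x - y) = complex.Im x - complex.Im y.
Proof. by case: x; case: y. Qed.

Lemma normc_ge_Im (R : rcfType) (x : R[i]) : (`|complex.Im x|%:C)%C <= `|x|.
Proof.
have -> : complex.Im x = - complex.Re (x * 'i%C) by rewrite ReiNIm opprK.
by rewrite normrN (le_trans (normc_ge_Re _)) // normrM normCi mulr1.
Qed.

Local Open Scope classical_set_scope.

Lemma cvg_part (R : realType) (z : nat -> R[i]) (l : R[i]) (g rho : R) :
  0 <= rho -> rho < 1 ->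
  (forall L, `|z L - l| <= ((g * rho ^+ L)%:C)%C) ->
  (fun L => complex.Re (z L)) @ \oo --> complex.Re l /\
  (fun L => complex.Im (z L)) @ \oo --> complex.Im l.
Proof.
move=> r0 r1 hb.
have h0 : (fun L => g * rho ^+ L) @ \oo --> (0 : R).
  rewrite -(mulr0 g); apply: cvgM; first exact: cvg_cst.
  by apply: cvg_expr; rewrite ger0_norm.
have hl : forall a : R, (fun L => a - g * rho ^+ L) @ \oo --> a.
  by move=> a; rewrite -[X in _ --> X](subr0 a); apply: cvgB => //; exact: cvg_cst.
have hu : forall a : R, (fun L => a + g * rho ^+ L) @ \oo --> a.
  by move=> a; rewrite -[X in _ --> X](addr0 a); apply: cvgD => //; exact: cvg_cst.
split.
- apply: (squeeze_cvgr _ (hl _) (hu _)); apply: nearW => L.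
  rewrite -ler_distl -Re_sub -lecR; exact: le_trans (normc_ge_Re _) (hb L).
- apply: (squeeze_cvgr _ (hl _) (hu _)); apply: nearW => L.
  rewrite -ler_distl -Im_sub -lecR; exact: le_trans (normc_ge_Im _) (hb L).
Qed.

Lemma series_geo (R : realType) (I : finType) (c q : I -> R[i]) (rho : R[i]) m :
  0 <= rho -> rho < 1 -> (forall x, `|q x| <= rho) ->
  cseries_to (fun n => \sum_x c x * q x ^+ n.+1) m
             (\sum_x c x * q x ^+ m.+1 / (1 - q x)).
Proof.
move=> r0 r1 hq.
have hq1 : forall x, q x != 1.
  move=> x; apply/eqP => e; have := hq x; rewrite e normr1 => h.
  by have := le_lt_trans h r1; rewrite ltxx.
set r := \sum_x c x * q x ^+ m.+1 / (1 - q x).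
set B := (\sum_x `|c x|) * (rho ^+ m.+1 / (1 - rho)).
have B0 : 0 <= B.
  apply: mulr_ge0; first by apply: sumr_ge0 => x _.
  by rewrite mulr_ge0 ?exprn_ge0 // invr_ge0 subr_ge0 ltW.
have eB : ((complex.Re B)%:C)%C = B by apply: RRe_real; apply: ger0_real.
have er : ((complex.Re rho)%:C)%C = rho by apply: RRe_real; apply: ger0_real.
have Rr0 : 0 <= complex.Re rho by rewrite -lecR er.
have Rr1 : complex.Re rho < 1 by rewrite -ltcR er.
have bnd : forall K, `|\sum_(m <= n < K + m) \sum_x c x * q x ^+ n.+1 - r| <=
             ((complex.Re B * complex.Re rho ^+ K)%:C)%C.
  move=> K; rewrite addnC psum //.
  have -> : forall a b : R[i], a - b - a = - b by move=> a b; ring.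
  rewrite normrN; apply: le_trans (tail_bound c (m + K).+1 r0 r1 hq) _.
  rewrite rmorphM rmorphXn /= eB er /B -mulrA; apply: ler_wpM2l.
    by apply: sumr_ge0 => x _.
  by rewrite mulrAC -exprD addSn.
have [h1 h2] := @cvg_part R _ r _ _ Rr0 Rr1 bnd.
split; rewrite -(cvg_shiftn m); [exact: h1 | exact: h2].
Qed.


Section Blocks.
Variable R : realType.
Variable N : nat.
Local Notation C := (R[i]).
Local Notation K := (@Kmx R N).

Definition Jmx : 'M[C]_(N + N) := block_mx 0 1%:M 1%:M 0.

Lemma KK : K *m K = 1%:M.
Proof.
rewrite /Kmx mulmx_block !mulmx0 !mul0mx !mulmx1 !addr0 !add0r mulmxN mulmx1 opprK.
by rewrite -scalar_mx_block.
Qed.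

Lemma Kc : map_mx conjC K = K.
Proof. by rewrite /Kmx map_block_mx map_mxN !map_mx1 !map_mx0. Qed.

Lemma Kt : K^t* = K.
Proof. by rewrite /Kmx tr_block_mx !trmx0 linearN /= !trmx1 map_block_mx map_mxN !map_mx1 !map_mx0. Qed.

Lemma JJ : Jmx *m Jmx = 1%:M.
Proof.
rewrite /Jmx mulmx_block !mulmx0 !mul0mx !mulmx1 !addr0 !add0r.
by rewrite -scalar_mx_block.
Qed.

Lemma JK : Jmx *m K = - (K *m Jmx).
Proof.
rewrite /Jmx /Kmx !mulmx_block !mulmx0 !mul0mx !mulmx1 !mul1mx !addr0 !add0r.
by rewrite opp_block_mx !oppr0 opprK.
Qed.

Lemma Js (s : 'M[C]_(N + N)) :
  (exists X Y : 'M[C]_N, s = block_mx X Y (map_mx (fun z : C => z^*%C) Y)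
                                     (map_mx (fun z : C => z^*%C) X)) ->
  Jmx *m s = map_mx conjC s *m Jmx.
Proof.
move=> [X [Y ->]].
rewrite /Jmx map_block_mx !mulmx_block !mulmx0 !mul0mx !mulmx1 !mul1mx !addr0 !add0r.
have cK : forall Z : 'M[C]_N, map_mx conjC (map_mx (fun z : C => z^*%C) Z) = Z.
  by move=> Z; apply/matrixP => a b; rewrite !mxE conjCK.
by rewrite !cK.
Qed.

Lemma eig_neg (s : 'M[C]_(N + N)) (v : 'rV[C]_(N + N)) (mu : C) :
  Jmx *m s = map_mx conjC s *m Jmx -> conjC mu = mu -> v != 0 ->
  v *m (K *m s) = mu *: v -> eigenvalue (K *m s) (- mu).
Proof.
move=> hJ hmu v0 hv; apply/eigenvalueP; exists (map_mx conjC v *m Jmx).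
  have e : v *m K *m s = mu *: v by rewrite -mulmxA.
  rewrite mulmxA -(mulmxA _ Jmx K) JK mulmxN mulNmx -mulmxA -(mulmxA K) hJ.
  rewrite -Kc !mulmxA -!map_mxM e map_mxZ /= hmu scaleNr.
  by rewrite -scalemxAl.
apply/eqP => h0; move/eqP: v0; apply.
have : map_mx conjC v = 0 by rewrite -[map_mx _ v]mulmx1 -JJ mulmxA h0 mul0mx.
move/(congr1 (map_mx conjC)); rewrite map_mx0 => <-.
by apply/matrixP => a b; rewrite !mxE conjCK.
Qed.

End Blocks.

Lemma dherm (R : realType) (p n : nat) (F : 'rV[R]_p -> 'M[R[i]]_n) k e :
  (forall x, adjmx (F x) = F x) -> mx_differentiable F ->
  (mxpartial F k e)^t* = mxpartial F k e.
Proof.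
move=> hF hD; apply/matrixP => a b; rewrite !mxE /cpartial.
have hab : forall x, F x a b = conjc (F x b a).
  by move=> x; rewrite -[in LHS]hF /adjmx mxE mxE.
have hre : (fun x => complex.Re (F x a b)) = (fun x => complex.Re (F x b a)).
  by apply/funext => x; rewrite hab; case: (F x b a).
have him : (fun x => complex.Im (F x a b)) = - (fun x => complex.Im (F x b a)).
  apply/funext => x; change (complex.Im (F x a b) = - complex.Im (F x b a)).
  by rewrite hab; case: (F x b a).
rewrite hre him deriveN; last exact: diff_derivable (hD b a e).2.
by [].
Qed.


Section Gen3.
Variable C : numClosedFieldType.

Lemma herm_entry n (G : 'M[C]_n) k l : G^t* = G -> conjC (G k l) = G l k.
Proof. by move=> hG; rewrite -[in RHS]hG !mxE. Qed.

Lemma sum_c_bound n (b : 'rV[C]_n) (G H : 'M[C]_n) :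
  (forall k, conjC (b 0 k) = b 0 k) -> G^t* = G -> H^t* = H ->
  \sum_(p : 'I_n * 'I_n) `|2^-1 * (b 0 p.1 ^+ 2 * b 0 p.2 ^+ 2 * G p.1 p.2 * H p.2 p.1)| <=
  2^-1 * (sqrtC (\sum_k \sum_l b 0 k ^+ 2 * G k l * b 0 l ^+ 2 * G l k) *
          sqrtC (\sum_k \sum_l b 0 k ^+ 2 * H k l * b 0 l ^+ 2 * H l k)).
Proof.
move=> hb hG hH.
have h2 : 0 <= (2 : C)^-1 by rewrite invr_ge0 ler0n.
under eq_bigr => p _ do rewrite normrM (ger0_norm h2).
rewrite -mulr_sumr ler_wpM2l //.
have e : forall p : 'I_n * 'I_n,
    `|b 0 p.1 ^+ 2 * b 0 p.2 ^+ 2 * G p.1 p.2 * H p.2 p.1| =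
    `|b 0 p.1 * b 0 p.2 * G p.1 p.2| * `|b 0 p.1 * b 0 p.2 * H p.2 p.1|.
  by move=> p; rewrite -normrM; congr `|_|; ring.
under eq_bigr => p _ do rewrite e.
apply: le_trans; first by apply: CS => p; exact: normr_ge0.
rewrite (pair_bigA _ (fun k l => b 0 k ^+ 2 * G k l * b 0 l ^+ 2 * G l k)).
rewrite (pair_bigA _ (fun k l => b 0 k ^+ 2 * H k l * b 0 l ^+ 2 * H l k)) /=.
rewrite le_eqVlt; apply/orP; left; apply/eqP; congr (sqrtC _ * sqrtC _); apply: eq_bigr => [[k l]] _ /=.
  rewrite normCK !rmorphM /= hb hb herm_entry //; ring.
rewrite normCK !rmorphM /= hb hb herm_entry //; ring.
Qed.

Lemma numfinal (x l : C) M : 1 < l ->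
  2^-1 * x * ((l^-1 ^+ 2) ^+ M.+2 / (1 - l^-1 ^+ 2)) =
  x / (2 * l ^+ (2 * M.+1) * (l ^+ 2 - 1)).
Proof.
move=> hl.
have l0 : l != 0 by rewrite gt_eqF // (lt_trans ltr01 hl).
have a0 : l ^+ 2 != 0 by rewrite expf_neq0.
have a1 : l ^+ 2 - 1 != 0.
  rewrite subr_eq0 gt_eqF //.
  by rewrite exprn_egt1.
rewrite exprS !exprVn exprM.
have P0 : (l ^+ 2) ^+ M.+1 != 0 by rewrite expf_neq0.
move: a0 a1 P0; set a := l ^+ 2; set P := a ^+ M.+1 => a0 a1 P0.
have t0 : (2 : C) != 0 by rewrite pnatr_eq0.
field.
by rewrite P0 a1 a0.
Qed.

End Gen3.

Lemma cseries_ext (R : realType) (t t' : nat -> R[i]) m r :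
  (forall n, t n = t' n) -> cseries_to t m r -> cseries_to t' m r.
Proof. by move=> h; have -> : t = t' by apply/funext. Qed.

Lemma adjE (R : realType) m n (M : 'M[R[i]]_(m,n)) : adjmx M = M^t*.
Proof. by apply/matrixP => a b; rewrite !mxE. Qed.

Local Close Scope classical_set_scope.

Theorem mainTheorem5 (R : realType) (N p : nat)
  (sigma : 'rV[R]_p -> 'M[R[i]]_(N + N))
  (Hcov : forall e, is_cov_mx (sigma e))
  (Hdiff : mx_differentiable sigma)
  (e : 'rV[R]_p) (i j : 'I_p) (lmin : R[i]) (M : nat)
  (Hmin : min_symp_eig (sigma e) lmin) (Hgt1 : 1 < lmin) :
  let A := @Kmx R N *m sigma e in
  let dA := fun k => @Kmx R N *m mxpartial sigma k e in
  exists r : R[i],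
    cseries_to (fun n => 2^-1 * \tr (invmx A ^+ n *m dA i *m (invmx A ^+ n *m dA j))) M.+1 r /\
    `|r| <= sqrtC (\tr ((A *m dA i) *m (A *m dA i))) * sqrtC (\tr ((A *m dA j) *m (A *m dA j)))
            / (2 * lmin ^+ (2 * M.+1) * (lmin ^+ 2 - 1)).
Proof.
move=> A dA.
have [hadj hblk hpd] := Hcov e.
set s := sigma e in hadj hblk hpd Hmin *.
have hs : s^t* = s by rewrite -adjE hadj.
have hpd' : forall u : 'rV_(N + N), u != 0 -> 0 < (u *m s *m u^t*) 0 0.
  move=> u u0; have := hpd (u^t*); rewrite adjE trmxCK; apply.
  apply: contra u0 => /eqP h; apply/eqP; by rewrite -[u]trmxCK h trmx0 map_mx0.
have [Y [b [h1 h2 hbr]]] := decomp hs hpd' (Kt R N).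
have [bne eig rowne trf trT] := key (KK R N) h1 h2.
have breal : forall k, b 0 k \is Num.real by move=> k; rewrite CrealE hbr.
have l0 : 0 < lmin by apply: lt_trans Hgt1.
have habs : forall k, lmin <= `|b 0 k|.
  move=> k; case: (real_ltgt0P (breal k)) => hb.
  - apply: Hmin.2; split => //.
    by apply/eigenvalueP; exists (row k (Y *m s)); [exact: eig | exact: rowne].
  - apply: Hmin.2; split; first by rewrite oppr_gt0.
    exact: (eig_neg (Js hblk) (hbr k) (rowne k) (eig k)).
  - by move: (bne k); rewrite hb eqxx.
pose Di := mxpartial sigma i e; pose Dj := mxpartial sigma j e.
have hherm : forall x, adjmx (sigma x) = sigma x by move=> x; have [] := Hcov x.
have Gh : forall D : 'M[R[i]]_(N + N), D^t* = D -> (Y *m D *m Y^t*)^t* = Y *m D *m Y^t*.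
  by move=> D hD; rewrite !tcM trmxCK hD mulmxA.
have Gi := Gh Di (dherm i e hherm Hdiff).
have Gj := Gh Dj (dherm j e hherm Hdiff).
set G := Y *m Di *m Y^t* in Gi; set H := Y *m Dj *m Y^t* in Gj.
pose q (x : 'I_(N + N) * 'I_(N + N)) := (b 0 x.1 * b 0 x.2)^-1.
pose c (x : 'I_(N + N) * 'I_(N + N)) :=
  2^-1 * (b 0 x.1 ^+ 2 * b 0 x.2 ^+ 2 * G x.1 x.2 * H x.2 x.1).
pose rho := lmin^-1 ^+ 2.
have li1 : lmin^-1 < 1 by rewrite invf_lt1.
have li0 : 0 <= lmin^-1 by rewrite invr_ge0 ltW.
have r0 : 0 <= rho by rewrite exprn_ge0.
have r1 : rho < 1 by rewrite exprn_ilt1.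
have hq : forall x, `|q x| <= rho.
  move=> [k l]; rewrite /q /rho normfV normrM invfM expr2 /=.
  have hk : forall k, `|b 0 k|^-1 <= lmin^-1.
    by move=> k'; rewrite lef_pV2 ?posrE ?normr_gt0 ?habs.
  by apply: ler_pM; rewrite ?invr_ge0 ?normr_ge0 ?hk.
have hterm : forall n, \sum_x c x * q x ^+ n.+1 =
             2^-1 * \tr (invmx A ^+ n *m dA i *m (invmx A ^+ n *m dA j)).
  move=> n; apply/esym; rewrite /A /dA trf -/G -/H mulr_sumr.
  under eq_bigr => k _ do rewrite mulr_sumr.
  rewrite pair_bigA /=; apply: eq_bigr => [[k l]] _ /=.
  rewrite /c /q /= invfM exprMn !exprS.
  have := bne k; have := bne l.
  move: (b 0 k) (b 0 l) ((b 0 k)^-1 ^+ n) ((b 0 l)^-1 ^+ n) => x y u w y0 x0.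
  by rewrite !expr0 !mulr1; field; rewrite x0 y0.
exists (\sum_x c x * q x ^+ M.+2 / (1 - q x)); split.
  exact: (cseries_ext hterm (series_geo c M.+1 r0 r1 hq)).
apply: le_trans (tail_bound c M.+2 r0 r1 hq) _.
rewrite -numfinal //; apply: ler_wpM2r.
  by rewrite mulr_ge0 ?exprn_ge0 // invr_ge0 subr_ge0 ltW.
rewrite /A /dA !trT -/G -/H.
exact: sum_c_bound.
Qed.
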